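(* Let $q\in\mathrm{prob}(\{0,1\}^2)$. Then $E_\le:=\{\chi^{(1)}_{1|1}:(\pi,\chi)\in\Theta_2,\ \mu(\pi,\chi)=q,\ \chi^{(1)}_{0|0}\le\chi^{(2)}_{0|0}\}\subseteq\left[0,\min\left\{\frac{q_{1+}}{q_{+1}},1\right\}\right]$, with the conventions $x/0:=\infty$ for $x>0$ and $\frac{q_{1+}}{q_{+1}}:=1$ in the case $q_{1+}=q_{+1}=0$ (equivalently $q_{00}=1$).
   Context: A subscript $+$ denotes summation over the replaced index: $q_{1+}=q_{10}+q_{11}$, $q_{+1}=q_{01}+q_{11}$. $\mathrm{prob}(\mathcal{X})$ is the set of probability densities on a finite set $\mathcal{X}$; $\mathrm{markov}(\mathcal{X},\mathcal{Y})$ the set of maps $(x,y)\mapsto p_{y|x}$ with $p_{\cdot|x}\in\mathrm{prob}(\mathcal{Y})$. $\Theta_2:=\mathrm{prob}(\{0,1\})\times\mathrm{markov}(\{0,1\},\{0,1\}^2)$, $\mu(\pi,\chi)_j:=\sum_{i=0}^1\pi_i\chi_{j|i}$ for $j\in\{0,1\}^2$, $\chi^{(1)}_{\iota|i}:=\chi_{\iota0|i}+\chi_{\iota1|i}$, $\chi^{(2)}_{\iota|i}:=\chi_{0\iota|i}+\chi_{1\iota|i}$. *)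

(* Defs.v *)
(* {0,1} is encoded as bool (0 = false, 1 = true),
   {0,1}^2 as bool * bool with j = (j1, j2). *)
From mathcomp Require Import all_boot all_order all_algebra.
Set Implicit Arguments. Unset Strict Implicit. Unset Printing Implicit Defensive.
Import Order.TTheory GRing.Theory Num.Theory.
Local Open Scope ring_scope.

Section Defs.
Variable R : realFieldType.

Definition is_prob (X : finType) (p : X -> R) : Prop :=
  (forall x, 0 <= p x) /\ \sum_(x : X) p x = 1.

Definition is_markov (X Y : finType) (k : X -> Y -> R) : Prop :=
  forall x, is_prob (k x).

Definition in_Theta2 (pi : bool -> R) (chi : bool -> bool * bool -> R) : Prop :=
  is_prob pi /\ is_markov chi.

Definition mu (pi : bool -> R) (chi : bool -> bool * bool -> R) (j : bool * bool) : R :=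
  \sum_(i : bool) pi i * chi i j.

Definition chi1 (chi : bool -> bool * bool -> R) (iota i : bool) : R :=
  chi i (iota, false) + chi i (iota, true).

Definition chi2 (chi : bool -> bool * bool -> R) (iota i : bool) : R :=
  chi i (false, iota) + chi i (true, iota).

Definition q1p (q : bool * bool -> R) : R := q (true, false) + q (true, true).
Definition qp1 (q : bool * bool -> R) : R := q (false, true) + q (true, true).

Definition E_le (q : bool * bool -> R) (x : R) : Prop :=
  exists (pi : bool -> R) (chi : bool -> bool * bool -> R),
    [/\ in_Theta2 pi chi, (forall j, mu pi chi j = q j),
        chi1 chi false false <= chi2 chi false false
      & x = chi1 chi true true].

(* min{q_{1+}/q_{+1}, 1} with conventions x/0 = oo for x > 0 and
   q_{1+}/q_{+1} = 1 when q_{1+} = q_{+1} = 0: in both cases with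
   q_{+1} = 0 the minimum is 1. *)
Definition upper_bound (q : bool * bool -> R) : R :=
  if qp1 q == 0 then 1 else Num.min (q1p q / qp1 q) 1.

End Defs.

(* Main.v *)
Require Import Defs.
From mathcomp Require Import all_boot all_order all_algebra.
From mathcomp Require Import lra.
Import Order.TTheory GRing.Theory Num.Theory.
Local Open Scope ring_scope.

Lemma sum_pair (R : realFieldType) (f : bool*bool -> R) :
  \sum_(x : bool*bool) f x = f (true,true) + f (true,false) + (f (false,true) + f(false,false)).
Proof.
rewrite (eq_bigr (fun x => f (x.1,x.2))); last by case.
by rewrite -(pair_bigA _ (fun a b => f (a,b))) /= !big_bool.
Qed.

Theorem lemma11 (R : realFieldType) (q : bool * bool -> R) :
  is_prob q ->
  forall x : R, E_le q x -> 0 <= x <= upper_bound q.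
Proof.
move=> _ x [pi [chi [[[Hp Sp] Hm] Hmu Hle ->]]].
move: (Hm false) (Hm true) => [H0 S0] [H1 S1].
rewrite sum_pair in S0; rewrite sum_pair in S1.
rewrite big_bool /= in Sp.
have E : forall j, q j = pi true * chi true j + pi false * chi false j.
  by move=> j; rewrite -Hmu /mu big_bool.
move: Hle; rewrite /chi1 /chi2 /upper_bound /q1p /qp1 !E => Hle.
have := H0 (true,true); have := H0 (true,false); have := H0 (false,true); have := H0 (false,false).
have := H1 (true,true); have := H1 (true,false); have := H1 (false,true); have := H1 (false,false).
have := Hp true; have := Hp false.
move: S0 S1 Sp Hle.
set a00 := chi false (false,false); set a01 := chi false (false,true).
set a10 := chi false (true,false); set a11 := chi false (true,true).
set b00 := chi true (false,false); set b01 := chi true (false,true).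
set b10 := chi true (true,false); set b11 := chi true (true,true).
set p0 := pi false; set p1 := pi true.
move=> S0 S1 Sp Hle hp0 hp1 hb00 hb01 hb10 hb11 ha00 ha01 ha10 ha11.
apply/andP; split; first lra.
case: eqP => [_|/eqP nz]; first lra.
have pos : 0 < p1 * b01 + p0 * a01 + (p1 * b11 + p0 * a11).
  rewrite lt_def nz /=; nra.
rewrite le_min; apply/andP; split; last lra.
rewrite ler_pdivlMr //.
have h1 : (b10 + b11) * (b01 + b11) <= b10 + b11 by nra.
have h2 : (b10 + b11) * (a01 + a11) <= a10 + a11 by nra.
have h3 : p1 * ((b10 + b11) * (b01 + b11)) <= p1 * (b10 + b11) by nra.
have h4 : p0 * ((b10 + b11) * (a01 + a11)) <= p0 * (a10 + a11) by nra.
nra.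
Qed.
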